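(* Let $r_1,\dots,r_N$ be rational numbers in arithmetic progression. Write $r_1=b/a$ and $d=r_2-r_1=v/u$ with $a,u$ positive integers, $b,v\in\mathbb{Z}$, $\gcd(a,b)=\gcd(u,v)=1$, and let $s=\operatorname{lcm}(a,u)$. Write $r_i=x_i/s$ with $x_i\in\mathbb{Z}$ for $1\le i\le N$. Let $0<\delta<1$ and set $m=\lceil 1/\delta\rceil$. If $s\ge\prod_{j=1}^{2m-1}j!$, then $$\big|\{\,i : \gcd(x_i,s)\le s^\delta\,\}\big|\ \ge\ \Big\lfloor \frac{N}{2m}\Big\rfloor.$$ *)

(* Defs.v *)
From HB Require Import structures.
From mathcomp Require Import all_boot all_order all_algebra.
From mathcomp Require Import reals exp.
Set Implicit Arguments. Unset Strict Implicit. Unset Printing Implicit Defensive.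

(* Main.v *)
Require Import Defs.
From HB Require Import structures.
From mathcomp Require Import all_boot all_order all_algebra.
From mathcomp Require Import reals exp.
From mathcomp Require Import ring lra.
Import Order.TTheory GRing.Theory Num.Theory.
Lemma gcd_mul_dvd c a b : gcdn c (a * b) %| gcdn c a * gcdn c b.
Proof.
rewrite muln_gcdr dvdn_gcd; apply/andP; split.
  by rewrite dvdn_mull // dvdn_gcdl.
apply: (@dvdn_trans (gcdn (c * b) (a * b))).
  by rewrite dvdn_gcd dvdn_gcdr andbT dvdn_mulr // dvdn_gcdl.
by rewrite -muln_gcdl mulnC.
Qed.
Definition Lc (g : nat -> nat) l := \big[lcmn/1%N]_(k < l) g k.
Lemma Lc_gcd g c l : gcdn (Lc g l) c %| \prod_(k < l) gcdn (g k) c.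
Proof.
elim: l => [|l IH]; first by rewrite /Lc !big_ord0 gcd1n.
rewrite /Lc !big_ord_recr /= -/(Lc g l).
apply: (@dvdn_trans (gcdn (Lc g l * g l) c)).
  rewrite dvdn_gcd dvdn_gcdr andbT.
  apply: (dvdn_trans (dvdn_gcdl _ _)).
  by rewrite -muln_lcm_gcd dvdn_mulr.
rewrite gcdnC (dvdn_trans (gcd_mul_dvd _ _ _)) //.
by rewrite gcdnC [gcdn c (g l)]gcdnC dvdn_mul.
Qed.
Lemma prod_sub_fact l : \prod_(k < l) (l - k) = l`!.
Proof.
elim: l => [|l IH]; first by rewrite big_ord0.
rewrite big_ord_recl subn0 factS; congr (_ * _).
by rewrite -IH; apply: eq_bigr => i _; rewrite /bump /= subSS.
Qed.

Lemma Lc_dvd g s l : (forall k, k < l -> g k %| s) -> Lc g l %| s.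
Proof.
elim: l => [|l IH] H; first by rewrite /Lc big_ord0 dvd1n.
rewrite /Lc big_ord_recr /= dvdn_lcm H // andbT IH // => k Hk.
by rewrite H // ltnS ltnW.
Qed.

Lemma keyB (g : nat -> nat) (s K : nat) : 0 < s ->
  (forall k, k < K -> g k %| s) ->
  (forall k l, k < l -> l < K -> gcdn (g k) (g l) %| l - k) ->
  \prod_(k < K) g k <= s * \prod_(j < K) j`!.
Proof.
move=> s0 Hs Hg.
suff H : forall l, l <= K -> \prod_(k < l) g k <= Lc g l * \prod_(j < l) j`!.
  apply: leq_trans (H K (leqnn _)) _; rewrite leq_mul2r; apply/orP; right.
  by apply: dvdn_leq => //; apply: Lc_dvd.
elim=> [|l IH] Hl; first by rewrite !big_ord0 /Lc big_ord0.
rewrite !big_ord_recr /= /Lc big_ord_recr /= -/(Lc g l).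
have H1 : gcdn (Lc g l) (g l) <= l`!.
  apply: dvdn_leq; first exact: fact_gt0.
  apply: dvdn_trans (Lc_gcd g (g l) l) _.
  rewrite -prod_sub_fact.
  elim/big_ind2: _ => //; first by move=> *; apply: dvdn_mul.
  by move=> i _; apply: Hg => //; rewrite (leq_trans _ Hl).
apply: (@leq_trans (Lc g l * (\prod_(j < l) j`!) * g l)).
  by rewrite leq_mul2r IH ?orbT // ltnW.
rewrite mulnAC -(muln_lcm_gcd (Lc g l) (g l)) -mulnA leq_mul2l mulnC leq_mul2l H1 !orbT //.
Qed.

Lemma setup a u : 0 < a -> 0 < u -> exists a' u' g,
  [/\ a = a' * g, u = u' * g, lcmn a u = a' * u' * g, coprime a' u' & 0 < g].
Proof.
move=> ha hu; set g := gcdn a u.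
have g0 : 0 < g by rewrite gcdn_gt0 ha.
exists (a %/ g), (u %/ g), g.
have Ea : a = a %/ g * g by rewrite divnK // dvdn_gcdl.
have Eu : u = u %/ g * g by rewrite divnK // dvdn_gcdr.
split => //.
- by rewrite /lcmn {1}Ea {1}Eu mulnA mulnK // mulnAC.
- by rewrite /coprime -(eqn_pmul2r g0) mul1n muln_gcdl -Ea -Eu.
Qed.

Lemma cop3 (b v : int) a' u' g : coprimez b (a' * g)%N%:Z -> coprimez v (u' * g)%N%:Z ->
  coprime a' u' -> gcdn (`|v| * a') (gcdn (`|b| * u') (a' * u' * g)) = 1.
Proof.
rewrite !coprimezE /= => hb hv hau.
have -> : gcdn (`|b| * u') (a' * u' * g) = u'.
  rewrite mulnAC -muln_gcdl.
  by move/eqP: hb => ->; rewrite mul1n.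
rewrite gcdnC Gauss_gcdl; last by rewrite coprime_sym.
suff: coprime `|v| u' by rewrite /coprime gcdnC => /eqP.
by apply: coprime_dvdr hv; rewrite dvdn_mulr.
Qed.

Lemma count_blocks (P : pred nat) K N q :
  (forall i0, 1 <= i0 -> i0 + K <= N.+1 -> has P (iota i0 K)) ->
  q * K <= N -> q <= count P (iota 1 N).
Proof.
move=> HB HqN.
suff H : q <= count P (iota 1 (q * K)).
  by apply: leq_trans H _; rewrite -(subnKC HqN) iotaD count_cat leq_addr.
elim: q HqN => [|q IH] HqN //.
rewrite mulSnr iotaD count_cat -addn1 leq_add //.
  by apply: IH; apply: leq_trans HqN; rewrite mulSnr leq_addr.
rewrite -has_count; apply: HB; first by rewrite add1n.
by rewrite add1n addSn ltnS -mulSnr.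
Qed.

Local Open Scope ring_scope.

Lemma xform (N : nat) (r : nat -> rat) (d : rat) (a u : nat) (b v : int) (x : nat -> int) a' u' g :
  a = (a' * g)%N -> u = (u' * g)%N -> lcmn a u = (a' * u' * g)%N -> (0 < a)%N -> (0 < u)%N ->
  r 1%N = b%:~R / a%:R -> d = v%:~R / u%:R ->
  (forall i : nat, (1 <= i <= N)%N -> r i = r 1%N + (i.-1)%:R * d) ->
  (forall i : nat, (1 <= i <= N)%N -> r i = (x i)%:~R / (lcmn a u)%:R) ->
  forall i, (1 <= i <= N)%N -> x i = b * u'%:Z + (i.-1)%:Z * v * a'%:Z.
Proof.
move=> Ea Eu Es ha hu hr1 hd hAP hx i hi.
have E := hx i hi; rewrite hAP // hr1 hd Es in E.
rewrite Ea Eu in E ha hu.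
have a0 : (a'%:R : rat) != 0 by rewrite pnatr_eq0 -lt0n; move: ha; rewrite muln_gt0 => /andP[].
have u0 : (u'%:R : rat) != 0 by rewrite pnatr_eq0 -lt0n; move: hu; rewrite muln_gt0 => /andP[].
have g0 : (g%:R : rat) != 0 by rewrite pnatr_eq0 -lt0n; move: hu; rewrite muln_gt0 => /andP[].
apply/eqP; rewrite -(eqr_int rat); apply/eqP.
have -> : (x i)%:~R = (a' * u' * g)%N%:R * ((x i)%:~R / (a' * u' * g)%N%:R) :> rat.
  by rewrite !natrM; field; rewrite g0 u0 a0.
rewrite -E !natrM !rmorphD !rmorphM /= !pmulrn.
by field; rewrite g0 u0 a0.
Qed.

Lemma dvd_n c n X Y s : (c %| n * X -> c %| n * Y -> c %| s ->
  gcdn X (gcdn Y s) = 1 -> c %| n)%N.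
Proof.
move=> h1 h2 h3 h4.
have : (c %| gcdn (n * X) (gcdn (n * Y) (n * s)))%N.
  by rewrite !dvdn_gcd h1 h2 dvdn_mull.
by rewrite -!muln_gcdr h4 muln1.
Qed.

Lemma pair_gcd (x : nat -> int) (b v : int) (a' u' s N i n : nat) :
  (forall i, (1 <= i <= N)%N -> x i = b * u'%:Z + (i.-1)%:Z * v * a'%:Z) ->
  (1 <= i)%N -> (i + n <= N)%N ->
  gcdn (`|v| * a') (gcdn (`|b| * u') s) = 1%N ->
  (gcdn (gcdn `|x i| s) (gcdn `|x (i + n)%N| s) %| n)%N.
Proof.
move=> hx hi hin hc.
set c := gcdn _ _.
have ci : (c%:Z %| x i)%Z.
  apply: (_ : (c %| `|x i|)%N).
  by rewrite (dvdn_trans (dvdn_gcdl _ _)) // dvdn_gcdl.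
have cj : (c%:Z %| x (i + n)%N)%Z.
  apply: (_ : (c %| `|x (i + n)%N|)%N).
  by rewrite /dvdz /= (dvdn_trans (dvdn_gcdr _ _)) // dvdn_gcdl.
have cs : (c %| s)%N.
  by rewrite (dvdn_trans (dvdn_gcdl _ _)) // dvdn_gcdr.
have Ei := hx i; have Ej := hx (i + n)%N.
rewrite hi /= in Ei; rewrite addn_gt0 hi /= in Ej.
have Ei' := Ei (leq_trans (leq_addr _ _) hin); have Ej' := Ej hin.
apply: (dvd_n _ _ _ _ _ _ _ cs hc).
- have : (c%:Z %| x (i + n)%N - x i)%Z by rewrite rpredB.
  have -> : x (i + n)%N - x i = n%:Z * v * a'%:Z.
    rewrite Ei' Ej'; case: i hi {Ei Ej Ei' Ej' hin c ci cj cs} => // i _.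
    rewrite addSn /= PoszD; ring.
  move=> h; have := (h : (c %| `|(n%:Z * v * a'%:Z)%R|)%N).
  by rewrite !abszM /= mulnA.
- have : (c%:Z %| (i.-1)%:Z * x (i + n)%N - ((i + n).-1)%:Z * x i)%Z.
    by rewrite rpredB // dvdz_mull.
  have -> : (i.-1)%:Z * x (i + n)%N - ((i + n).-1)%:Z * x i = - (n%:Z * b * u'%:Z).
    rewrite Ei' Ej'; case: i hi {Ei Ej Ei' Ej' hin c ci cj cs} => // i _.
    rewrite addSn /= PoszD; ring.
  move=> h; have := (h : (c %| `|(- (n%:Z * b * u'%:Z))%R|)%N).
  by rewrite abszN !abszM /= mulnA.
Qed.



Theorem lemma5p1 (R : realType) (N : nat) (r : nat -> rat) (d : rat)
    (a u : nat) (b v : int) (x : nat -> int) (delta : R)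
    (ha : (0 < a)%N) (hu : (0 < u)%N)
    (hab : coprimez b a%:Z) (huv : coprimez v u%:Z)
    (hr1 : r 1%N = b%:~R / a%:R)
    (hd : d = v%:~R / u%:R)
    (hAP : forall i : nat, (1 <= i <= N)%N -> r i = r 1%N + (i.-1)%:R * d)
    (hx : forall i : nat, (1 <= i <= N)%N -> r i = (x i)%:~R / (lcmn a u)%:R)
    (hdelta : 0 < delta < 1)
    (hs : (\prod_(1 <= j < (2 * `|Num.ceil (delta^-1)|%N - 1).+1) j`! <= lcmn a u)%N) :
    (N %/ (2 * `|Num.ceil (delta^-1)|%N)
       <= count (fun i : nat => (((gcdz (x i) (lcmn a u)%:Z)%:~R : R)
                                  <= ((lcmn a u)%:R : R) `^ delta)%R)
                (iota 1 N))%N.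
Proof.
have [a' [u' [g [Ea Eu Es cop g0]]]] := setup _ _ ha hu.
have hxf := @xform N r d a u b v x a' u' g Ea Eu Es ha hu hr1 hd hAP hx.
set s := lcmn a u in hs hx Es *.
have s0 : (0 < s)%N by rewrite /s lcmn_gt0 ha hu.
have hc : gcdn (`|v| * a') (gcdn (`|b| * u') s) = 1%N.
  by rewrite Es; apply: cop3; rewrite -?Ea -?Eu.
set m := `|Num.ceil (delta^-1)|%N.
have dpos : 0 < delta by case/andP: hdelta.
have mge : delta^-1 <= (m%:R : R).
  rewrite /m natr_absz ger0_norm; first exact: ceil_ge.
  rewrite ceil_ge0; have : 0 < delta^-1 by rewrite invr_gt0.
  move=> h; lra.
have md : 1 <= (m%:R : R) * delta.
  have h := ler_wpM2r (ltW dpos) mge.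
  by rewrite mulVf ?lt0r_neq0 in h.
have m1 : (0 < m)%N.
  rewrite lt0n; apply/negP => /eqP m0; move: md; rewrite m0 mul0r.
  by rewrite ler10.
set K := (2 * m)%N.
have K0 : (0 < K)%N by rewrite /K muln_gt0 m1.
apply: (@count_blocks _ K); last exact: leq_divM.
move=> i0 hi0 hiK.
apply/negPn/negP => /hasPn Hbad.
pose G k := gcdn `|x (i0 + k)%N| s.
have HG : forall k, (k < K)%N -> s%:R `^ delta < (G k)%:R :> R.
  move=> k hk; have := Hbad (i0 + k)%N.
  rewrite mem_iota leq_addr ltn_add2l hk => /(_ isT).
  by rewrite -ltNge.
have Hprod := @keyB G s K s0.
have Hp : (\prod_(k < K) G k <= s * \prod_(j < K) j`!)%N.
  apply: Hprod => [k _|k l hkl hlK]; first exact: dvdn_gcdr.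
  have h1 : (0 < i0 + k)%N by rewrite (leq_trans hi0) ?leq_addr.
  have h2 : (i0 + k + (l - k) <= N)%N.
    rewrite -addnA subnKC; last exact: ltnW hkl.
    rewrite -ltnS; apply: leq_trans hiK; by rewrite ltn_add2l.
  have := @pair_gcd x b v a' u' s N (i0 + k)%N (l - k)%N hxf h1 h2 hc.
  by rewrite -addnA subnKC //; exact: ltnW hkl.
have Hf : (\prod_(j < K) j`! = \prod_(1 <= j < (2 * m - 1).+1) j`!)%N.
  rewrite subn1 -/K prednK // -(big_mkord xpredT) big_ltn //.
  by rewrite fact0 mul1n.
have hs' : (\prod_(1 <= j < (2 * m - 1).+1) j`! <= s)%N := hs.
have H1 : (\prod_(k < K) G k <= s * s)%N.
  by apply: leq_trans Hp _; rewrite leq_mul2l Hf hs' orbT.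
have H2 : (s%:R : R) ^+ 2 < (\prod_(k < K) G k)%:R.
  rewrite natr_prod -(big_mkord xpredT (fun k => (G k)%:R)).
  apply: (@le_lt_trans _ _ (\prod_(0 <= k < K) (s%:R `^ delta : R))).
    rewrite prodr_const_nat subn0 -(powR_mulrn K (powR_ge0 s%:R delta)) -powRrM -(powR_mulrn 2 (ler0n R s)).
    apply: ler_powR; first by rewrite ler1n.
    rewrite /K natrM; nra.
  apply: ltr_prod_nat => // k hk; rewrite powR_ge0 /=; apply: HG; by case/andP: hk.
move: H2; rewrite -natrX ltr_nat ltnNge.
by rewrite (leq_trans H1) // expnS expn1.
Qed.
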